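(* Let $w:\mathbb R^d\times\mathbb R^d\to\mathbb R$ satisfy $|w(y,x)-w(y',x')|\le L_w(\|x-x'\|+\|y-y'\|)$ for some $L_w>0$ and all $x,x',y,y'$, and suppose there exist $x_0,y_0\in\mathbb R^d$ with $\sup_x|w(y_0,x)|<\infty$ and $\sup_y|w(y,x_0)|<\infty$. Let $\mu,\rho$ be probability measures on $\mathbb R^d$, with $\mathcal E_\beta:=\int e^{\beta\|x\|}\rho(dx)<\infty$ for some $\beta>0$, and $\mu$ supported in the closed ball $B(0,r)$ for some $r>0$. Then for any $\beta'<\beta$ there exists a constant $C=C(w,\beta,\beta')$ such that $$\sup_{\|y\|\le r}\Big|\|w_y\|^2_{L^2(\mu)}-\|w_y\|^2_{L^2(\rho)}\Big|\le C(1+r)W_1(\mu,\rho)+C\mathcal E_\beta e^{-\beta' r}.$$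
   Context: $w_y(x)=w(y,x)$; $\|h\|_{L^2(\nu)}^2=\int|h|^2d\nu$; $W_1$ is the order-1 Wasserstein distance on $\mathbb R^d$ with respect to $\|x-y\|$. *)

(* Defs.v *)
From HB Require Import structures.
From mathcomp Require Import all_boot all_order all_algebra.
From mathcomp Require Import all_classical all_reals all_analysis.
Set Implicit Arguments. Unset Strict Implicit. Unset Printing Implicit Defensive.
Import Order.TTheory GRing.Theory Num.Theory.
Import numFieldNormedType.Exports.
Local Open Scope classical_set_scope.
Local Open Scope ring_scope.

(* R^d as row vectors, equipped with its Borel sigma-algebra (generated by the
   open sets of the standard product topology on 'rV[R]_d). *)
Definition Rd (R : realType) (d : nat) :=
  g_sigma_algebraType (@open 'rV[R]_d).

Definition enorm (R : realType) (d : nat) (x : 'rV[R]_d) : R :=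
  Num.sqrt (\sum_(i < d) x ord0 i ^+ 2).

Definition coupling (R : realType) (d : nat)
  (mu nu : probability (Rd R d) R) (pi : probability (Rd R d * Rd R d)%type R) : Prop :=
  (forall A : set (Rd R d), measurable A -> pi (A `*` setT) = mu A) /\
  (forall A : set (Rd R d), measurable A -> pi (setT `*` A) = nu A).

Definition W1 (R : realType) (d : nat) (mu nu : probability (Rd R d) R) : \bar R :=
  ereal_inf [set (\int[pi]_z (enorm ((z.1 : 'rV[R]_d) - (z.2 : 'rV[R]_d)))%:E)%E
            | pi in [set pi | coupling mu nu pi]].

Definition L2sq (R : realType) (d : nat) (mu : probability (Rd R d) R)
  (h : 'rV[R]_d -> R) : \bar R :=
  (\int[mu]_x (h x ^+ 2)%:E)%E.

Definition expmoment (R : realType) (d : nat) (rho : probability (Rd R d) R) (beta : R) : \bar R :=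
  (\int[rho]_x (expR (beta * enorm (x : 'rV[R]_d)))%:E)%E.

(* Main.v *)
Require Import Defs.
From HB Require Import structures.
From mathcomp Require Import all_boot all_order all_algebra.
From mathcomp Require Import all_classical all_reals all_analysis.
From mathcomp Require Import measurable_realfun.
From mathcomp Require Import ring lra.
Import Order.TTheory GRing.Theory Num.Theory.
Import numFieldNormedType.Exports.
Local Open Scope classical_set_scope.
Local Open Scope ring_scope.

Lemma cont_meas (R : realType) d (f : 'rV[R]_d -> R) : continuous f ->
  measurable_fun (setT : set (Rd R d)) (f : Rd R d -> R).
Proof.
move=> /continuousP cf; apply: (measurability _ (RGenOpens.measurableE R)).
move=> _ [_ [a [b ->] <-]]; rewrite setTI.
apply: sub_sigma_algebra; apply: cf; exact: interval_open.
Qed.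

Section S.
Variable R : realType.
Variable d : nat.

Lemma coord_le (v : 'rV[R]_d) i : `|v ord0 i| <= `|v|.
Proof.
rewrite [leRHS]/Num.Def.normr/= mx_normrE.
exact: (le_bigmax _ _ (ord0, i)).
Qed.

Lemma enorm_ge0 (v : 'rV[R]_d) : 0 <= enorm v.
Proof. exact: sqrtr_ge0. Qed.

Lemma enorm_sq (v : 'rV[R]_d) : enorm v ^+ 2 = \sum_(i < d) v ord0 i ^+ 2.
Proof. by rewrite /enorm sqr_sqrtr // sumr_ge0 // => i _; exact: sqr_ge0. Qed.

Lemma enorm_le_mx (v : 'rV[R]_d) : enorm v <= Num.sqrt d%:R * `|v|.
Proof.
rewrite -(ger0_norm (normr_ge0 v)) -sqrtr_sqr -sqrtrM ?ler0n //.
rewrite /enorm ler_sqrt; last by rewrite mulr_ge0 // sqr_ge0.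
apply: (@le_trans _ _ (\sum_(i < d) `|v| ^+ 2)).
  apply: ler_sum => i _.
  rewrite -[X in X <= _]ger0_norm ?sqr_ge0 // normrX lerXn2r ?nnegrE //; exact: coord_le.
by rewrite sumr_const card_ord mulr_natl.
Qed.

Lemma lip_cont (f : 'rV[R]_d -> R) K : 0 <= K ->
  (forall x x', `|f x - f x'| <= K * enorm (x - x')) -> continuous f.
Proof.
move=> K0 Hf x; apply/(@cvgrPdist_lt _ _ _ (nbhs x) (nbhs_filter x)) => e e0.
set c := K * Num.sqrt d%:R + 1.
have c0 : 0 < c by rewrite ltr_wpDl // mulr_ge0 // sqrtr_ge0.
have ec0 : 0 < e / c by rewrite divr_gt0.
apply/nbhs_ballP; exists (e / c) => // z.
rewrite mx_norm_ball /ball_ /= => hz.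
apply: (le_lt_trans (Hf _ _)).
apply: (le_lt_trans (ler_wpM2l K0 (enorm_le_mx _))).
rewrite mulrA; apply: (@le_lt_trans _ _ (c * `|x - z|)).
  by apply: ler_wpM2r => //; rewrite lerDl.
by rewrite -ltr_pdivlMl // mulrC.
Qed.
End S.

Lemma meas_snorm (R : realType) d' (T : measurableType d') n (g : 'I_n -> T -> R) :
  (forall i, measurable_fun setT (g i)) ->
  measurable_fun setT (fun t => Num.sqrt (\sum_(i < n) g i t ^+ 2)).
Proof.
move=> mg.
apply: (@measurableT_comp _ _ _ _ _ _ (@Num.sqrt R)).
  exact: continuous_measurable_fun (@sqrt_continuous R).
by apply: measurable_sum => i; exact: measurable_funX.
Qed.

Lemma meas_enorm (R : realType) d :
  measurable_fun (setT : set (Rd R d)) (fun x : Rd R d => enorm (x : 'rV[R]_d)).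
Proof.
apply: (@meas_snorm R _ (Rd R d) d (fun i (x : Rd R d) => (x : 'rV[R]_d) ord0 i)) => i.
exact: cont_meas (@coord_continuous _ _ _ _ _).
Qed.

Lemma meas_enorm2 (R : realType) d :
  measurable_fun (setT : set (Rd R d * Rd R d)%type)
    (fun z : Rd R d * Rd R d => enorm ((z.1 : 'rV[R]_d) - z.2)).
Proof.
rewrite (_ : (fun z : Rd R d * Rd R d => _) = fun z => Num.sqrt (\sum_(i < d) ((z.1 : 'rV[R]_d) ord0 i - (z.2 : 'rV[R]_d) ord0 i) ^+ 2)); last first.
  by apply/funext => z; rewrite /enorm; under eq_bigr do rewrite !mxE.
apply: (@meas_snorm R _ (Rd R d * Rd R d)%type d (fun i (z : Rd R d * Rd R d) => (z.1 : 'rV[R]_d) ord0 i - (z.2 : 'rV[R]_d) ord0 i)) => i.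
apply: measurable_funB.
  apply: (@measurableT_comp _ _ _ _ _ _ (fun x : Rd R d => (x : 'rV[R]_d) ord0 i) _ fst).
    exact: cont_meas (@coord_continuous _ _ _ _ _).
  exact: measurable_fst.
apply: (@measurableT_comp _ _ _ _ _ _ (fun x : Rd R d => (x : 'rV[R]_d) ord0 i) _ snd).
  exact: cont_meas (@coord_continuous _ _ _ _ _).
exact: measurable_snd.
Qed.


Lemma tail_bound (R : realType) (g s : R) : 0 < g -> 0 <= s ->
  s ^+ 2 <= 2 / g ^+ 2 * expR (g * s).
Proof.
move=> g0 s0.
have h := @expR_ge1Dxn R (g * s) 1 (mulr_ge0 (ltW g0) s0).
rewrite (_ : (1.+1)`!%:R = 2%:R :> R) // in h.
have e : s ^+ 2 = 2 / g ^+ 2 * ((g * s) ^+ 2 / 2%:R).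
  by field; rewrite gt_eqF.
rewrite e; apply: ler_wpM2l; first by rewrite divr_ge0 // exprn_ge0 // ltW.
by apply: le_trans h; rewrite lerDr.
Qed.

Lemma tail2 (R : realType) (b b' m r s : R) : 0 <= m -> b' <= m -> m < b -> 0 < r -> r < s ->
  s ^+ 2 <= 2 / (b - m) ^+ 2 * (expR (b * s) * expR (- b' * r)).
Proof.
move=> m0 bm mb r0 rs.
have g0 : 0 < b - m by rewrite subr_gt0.
apply: (le_trans (tail_bound _ _ _ g0 (ltW (lt_trans r0 rs)))).
apply: ler_wpM2l; first by rewrite divr_ge0 // exprn_ge0 // ltW.
rewrite -expRD ler_expR mulrBl lerD2l mulNr lerN2.
have [hb|hb] := leP b' 0.
  apply: le_trans (_ : 0 <= _); first by rewrite mulr_le0_ge0 // ltW.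
  by rewrite mulr_ge0 // ltW // (lt_trans r0 rs).
apply: (@le_trans _ _ (b' * s)); first by rewrite ler_pM2l // ltW.
by rewrite ler_pM2r // (lt_trans r0 rs).
Qed.

Lemma enorm0 (R : realType) d : enorm (0 : 'rV[R]_d) = 0.
Proof. by rewrite /enorm big1 ?sqrtr0 // => i _; rewrite mxE expr0n. Qed.

Lemma enorm_subsq (R : realType) d (x x' : 'rV[R]_d) :
  enorm (x - x') ^+ 2 <= 2 * enorm x ^+ 2 + 2 * enorm x' ^+ 2.
Proof.
rewrite !enorm_sq !mulr_sumr -big_split /=; apply: ler_sum => i _.
rewrite !mxE.
have := sqr_ge0 (x ord0 i + x' ord0 i); nra.
Qed.

Section PW.
Variables (R : realType) (d : nat) (w : 'rV[R]_d -> 'rV[R]_d -> R) (Lw : R).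
Hypothesis Lw0 : 0 < Lw.
Hypothesis HL : forall x x' y y' : 'rV[R]_d,
      `|w y x - w y' x'| <= Lw * (enorm (x - x') + enorm (y - y')).

Lemma wlip (y x x' : 'rV[R]_d) : `|w y x - w y x'| <= Lw * enorm (x - x').
Proof. by have := HL x x' y y; rewrite subrr enorm0 addr0. Qed.

Lemma wgrowth (y x : 'rV[R]_d) : `|w y x| <= `|w 0 0| + Lw * (enorm x + enorm y).
Proof.
have := HL x 0 y 0; rewrite !subr0 => h.
have := ler_normD (w y x - w 0 0) (w 0 0); rewrite subrK => h2.
by apply: le_trans h2 _; rewrite addrC lerD2l.
Qed.

Lemma pw (b b' m r : R) (x x' y : 'rV[R]_d) :
  0 <= m -> b' <= m -> m < b -> 0 < r -> enorm x <= r -> enorm y <= r ->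
  `|w y x ^+ 2 - w y x' ^+ 2| <=
    (2 * Lw * `|w 0 0| + 4 * Lw ^+ 2) * (1 + r) * enorm (x - x')
    + 2 * Lw ^+ 2 * (2 / (b - m) ^+ 2) * (expR (b * enorm x') * expR (- b' * r)).
Proof.
move=> m0 bm mb r0 hx hy.
set K0 := `|w 0 0|; set e := enorm (x - x'); set s := enorm x'.
set c := 2 / (b - m) ^+ 2; set E := expR (b * s) * expR (- b' * r).
have K00 : 0 <= K0 by exact: normr_ge0.
have e0 : 0 <= e by exact: enorm_ge0.
have s0 : 0 <= s by exact: enorm_ge0.
have c0 : 0 <= c by rewrite divr_ge0 // exprn_ge0 // subr_ge0 ltW.
have E0 : 0 <= E by rewrite mulr_ge0 // expR_ge0.
have h1 := wlip y x x'; rewrite -/e in h1.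
have hA : `|w y x + w y x'| <= 2 * K0 + 3 * Lw * r + Lw * s.
  apply: (le_trans (ler_normD _ _)).
  have := wgrowth y x; have := wgrowth y x'; rewrite -/K0 -/s.
  have := ler_wpM2l (ltW Lw0) hx; have := ler_wpM2l (ltW Lw0) hy.
  rewrite !mulrDr; lra.
rewrite subr_sqr normrM.
have hP : `|w y x - w y x'| * `|w y x + w y x'| <= Lw * e * (2 * K0 + 3 * Lw * r + Lw * s).
  apply: ler_pM => //; rewrite ?normr_ge0 //.
apply: (le_trans hP).
have [hs|hs] := leP s r.
  have : 0 <= 2 * Lw ^+ 2 * c * E.
    by apply: mulr_ge0 => //; apply: mulr_ge0 => //; apply: mulr_ge0 => //; exact: sqr_ge0.
  have : Lw * e * (2 * K0 + 3 * Lw * r + Lw * s) <= Lw * e * (2 * K0 + 4 * Lw * r).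
    by apply: ler_wpM2l; [rewrite mulr_ge0 // ltW | have := ler_wpM2l (ltW Lw0) hs; lra].
  have : 0 <= Lw * Lw * e by rewrite !mulr_ge0 // ltW.
  have : 0 <= Lw * K0 * r * e by rewrite !mulr_ge0 // ltW.
  lra.
have hes : e <= 2 * s.
  have h := enorm_subsq _ _ x x'; rewrite -/e -/s in h.
  have hxr : enorm x ^+ 2 <= s ^+ 2.
    by apply: lerXn2r; rewrite ?nnegrE ?enorm_ge0 // (le_trans hx) // ltW.
  rewrite -ler_sqr ?nnegrE ?mulr_ge0 //; nra.
have ht := tail2 _ _ _ _ _ _ m0 bm mb r0 hs; rewrite -/c -/E in ht.
have : Lw ^+ 2 * (e * s) <= 2 * Lw ^+ 2 * c * E.
  have hes2 : e * s <= 2 * s ^+ 2 by nra.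
  have hs2 : 2 * s ^+ 2 <= 2 * (c * E) by rewrite ler_pM2l.
  have hl : 0 <= Lw ^+ 2 by exact: sqr_ge0.
  have := ler_wpM2l hl (le_trans hes2 hs2).
  move=> h; lra.
have : Lw * e * (2 * K0 + 3 * Lw * r) <= (2 * Lw * K0 + 4 * Lw ^+ 2) * (1 + r) * e.
  have : 0 <= Lw * e * K0 by rewrite !mulr_ge0 // ltW.
  have : 0 <= Lw * Lw * e * r by rewrite !mulr_ge0 // ltW.
  nra.
nra.
Qed.
End PW.

Section Marg.
Variables (R : realType) (d : nat).
Local Open Scope ereal_scope.

Lemma marg1 (mu rho : probability (Rd R d) R) (pi : probability (Rd R d * Rd R d)%type R)
  (h : Rd R d -> \bar R) : coupling mu rho pi ->
  measurable_fun setT h -> (forall x, 0 <= h x) ->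
  \int[pi]_z h z.1 = \int[mu]_x h x.
Proof.
move=> [H1 H2] mh h0.
have mfst : measurable_fun (setT : set (Rd R d * Rd R d)%type) fst := measurable_fst.
have := ge0_integral_pushforward mfst pi measurableT mh (fun x _ => h0 x).
rewrite preimage_setT => <-.
apply: eq_measure_integral => A mA _.
transitivity (pi (A `*` setT)); last exact: H1.
rewrite /= /pushforward; congr (pi _).
by apply/seteqP; split => [[a b]|[a b]] //= [].
Qed.

Lemma marg2 (mu rho : probability (Rd R d) R) (pi : probability (Rd R d * Rd R d)%type R)
  (h : Rd R d -> \bar R) : coupling mu rho pi ->
  measurable_fun setT h -> (forall x, 0 <= h x) ->
  \int[pi]_z h z.2 = \int[rho]_x h x.
Proof.
move=> [H1 H2] mh h0.
have msnd : measurable_fun (setT : set (Rd R d * Rd R d)%type) snd := measurable_snd.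
have := ge0_integral_pushforward msnd pi measurableT mh (fun x _ => h0 x).
rewrite preimage_setT => <-.
apply: eq_measure_integral => A mA _.
transitivity (pi (setT `*` A)); last exact: H2.
rewrite /= /pushforward; congr (pi _).
by apply/seteqP; split => [[a b]|[a b]] //= [].
Qed.
End Marg.

Theorem lemma1 (R : realType) (d : nat) (w : 'rV[R]_d -> 'rV[R]_d -> R) (Lw : R)
  (x0 y0 : 'rV[R]_d) (beta beta' : R) :
  0 < Lw ->
  (forall x x' y y' : 'rV[R]_d,
      `|w y x - w y' x'| <= Lw * (enorm (x - x') + enorm (y - y'))) ->
  (exists M : R, forall x, `|w y0 x| <= M) ->
  (exists M : R, forall y, `|w y x0| <= M) ->
  0 < beta -> beta' < beta ->
  exists C : R,
    forall (mu rho : probability (Rd R d) R) (r : R),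
      0 < r ->
      (expmoment rho beta < +oo)%E ->
      mu [set x : Rd R d | r < enorm (x : 'rV[R]_d)] = 0%E ->
      forall y : 'rV[R]_d, enorm y <= r ->
        (`| L2sq mu (w y) - L2sq rho (w y) |
           <= (C * (1 + r))%:E * W1 mu rho
              + C%:E * expmoment rho beta * (expR (- beta' * r))%:E)%E.
Proof.
move=> Lw0 HL _ _ b0 hbb.
pose m := if 0 <= beta' then beta' else 0.
have m0 : 0 <= m by rewrite /m; case: ifP.
have bm : beta' <= m by rewrite /m; case: ifP => // /negbT; rewrite -ltNge => /ltW.
have mb : m < beta by rewrite /m; case: ifP.
pose c := 2 / (beta - m) ^+ 2.
pose C1 := 2 * Lw * `|w 0 0| + 4 * Lw ^+ 2.
pose C3 := 2 * Lw ^+ 2 * c.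
have c0 : 0 <= c by rewrite divr_ge0 // exprn_ge0 // subr_ge0 ltW.
have C10 : 0 < C1 by rewrite /C1; have := normr_ge0 (w 0 0); nra.
have C30 : 0 <= C3 by rewrite mulr_ge0 // mulr_ge0 // sqr_ge0.
exists (C1 + C3).
move=> mu rho r r0 Eb Hmu y hy.
have HLy := wlip _ _ _ _ HL y.
have wc : continuous (w y) := lip_cont _ _ _ _ (ltW Lw0) HLy.
pose f := fun x : Rd R d => w y x ^+ 2.
have mf : measurable_fun (setT : set (Rd R d)) f.
  by apply: measurable_funX; exact: cont_meas.
have mfE : measurable_fun (setT : set (Rd R d)) (fun x => (f x)%:E).
  exact/measurable_EFinP.
have f0 : forall x, 0 <= f x by move=> x; exact: sqr_ge0.
pose N := [set x : Rd R d | r < enorm (x : 'rV[R]_d)].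
have mN : measurable N.
  have := meas_enorm R d measurableT _ (measurable_itv `]r, +oo[).
  rewrite setTI; congr measurable; apply/seteqP; split => x /=;
    by rewrite in_itv /= andbT.
pose K0 := `|w 0 0|.
have K00 : 0 <= K0 by exact: normr_ge0.
have hny : 0 <= enorm y by exact: enorm_ge0.
pose M := (K0 + 2 * Lw * r) ^+ 2.
have Imu_le : (\int[mu]_x (f x)%:E <= M%:E)%E.
  apply: (@le_trans _ _ (\int[mu]_x (cst M%:E x))%E); last first.
    rewrite integral_cst // [X in (_ * X)%E](_ : _ = 1%E) ?mule1 //; exact: probability_setT.
  apply: ae_ge0_le_integral => //.
  - by move=> x _; rewrite lee_fin.
  - by move=> x _; rewrite lee_fin /M sqr_ge0.
  exists N; split => // x /= hx; rewrite /N /=; rewrite ltNge; apply/negP => hxr.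
  apply: hx => _; rewrite lee_fin /f /M.
  rewrite -real_normK ?num_real //; apply: lerXn2r; rewrite ?nnegrE ?normr_ge0 //.
    by rewrite addr_ge0 // !mulr_ge0 // ?ltW.
  apply: (le_trans (wgrowth _ _ _ _ HL y x)); rewrite -/K0 lerD2l.
  have := ler_wpM2l (ltW Lw0) hxr; have := ler_wpM2l (ltW Lw0) hy; lra.
have Imu0 : (0 <= \int[mu]_x (f x)%:E)%E by apply: integral_ge0 => x _; rewrite lee_fin.
pose Imu := fine (\int[mu]_x (f x)%:E).
have ImuE : (\int[mu]_x (f x)%:E = Imu%:E)%E.
  by rewrite /Imu fineK // ge0_fin_numE // (le_lt_trans Imu_le) // ltry.
pose ex := fun (x : Rd R d) => expR (beta * enorm (x : 'rV[R]_d)).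
have mex : measurable_fun (setT : set (Rd R d)) ex.
  apply: (@measurableT_comp _ _ _ _ _ _ expR _ (fun x : Rd R d => beta * enorm (x : 'rV[R]_d))).
    exact: measurable_expR.
  apply: measurable_funM; first exact: measurable_cst.
  exact: meas_enorm.
have mexE : measurable_fun (setT : set (Rd R d)) (fun x => (ex x)%:E).
  exact/measurable_EFinP.
have ex0 : forall x, 0 <= ex x by move=> x; exact: expR_ge0.
have Eb0 : (0 <= expmoment rho beta)%E by apply: integral_ge0 => x _; rewrite lee_fin.
pose E := fine (expmoment rho beta).
have EE : expmoment rho beta = E%:E by rewrite /E fineK // ge0_fin_numE.
have E0 : 0 <= E by rewrite -lee_fin -EE.
pose A := 2 * (K0 + Lw * r) ^+ 2.
pose B := 2 * Lw ^+ 2 * (2 / beta ^+ 2).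
have A0 : 0 <= A by rewrite /A mulr_ge0 // sqr_ge0.
have B0 : 0 <= B.
  by rewrite /B; apply: mulr_ge0; [apply: mulr_ge0 => //; exact: sqr_ge0|apply: divr_ge0 => //; exact: sqr_ge0].
have Irho_le : (\int[rho]_x (f x)%:E <= (A + B * E)%:E)%E.
  apply: (@le_trans _ _ (\int[rho]_x (A%:E + B%:E * (ex x)%:E))%E).
    apply: ge0_le_integral => //.
    - by move=> x _; rewrite lee_fin.
    - apply: emeasurable_funD; first exact: measurable_cst.
      by apply: emeasurable_funM => //; exact: measurable_cst.
    move=> x _; rewrite -EFinM -EFinD lee_fin /f.
    have h1 := wgrowth _ _ _ _ HL y x; rewrite -/K0 in h1.
    have h2 : `|w y x| <= (K0 + Lw * r) + Lw * enorm (x : 'rV[R]_d).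
      apply: (le_trans h1); have := ler_wpM2l (ltW Lw0) hy; lra.
    have h3 := tail_bound _ _ _ b0 (enorm_ge0 _ _ (x : 'rV[R]_d)).
    have hx0 := enorm_ge0 _ _ (x : 'rV[R]_d).
    have h4 : w y x ^+ 2 <= ((K0 + Lw * r) + Lw * enorm (x : 'rV[R]_d)) ^+ 2.
      rewrite -real_normK ?num_real //; apply: lerXn2r; rewrite ?nnegrE ?normr_ge0 //.
      by rewrite !addr_ge0 // !mulr_ge0 // ltW.
    apply: (le_trans h4); rewrite /A /B /ex.
    have := ler_wpM2l (sqr_ge0 Lw) h3.
    have := sqr_ge0 (K0 + Lw * r - Lw * enorm (x : 'rV[R]_d)).
    nra.
  rewrite ge0_integralD //.
  - rewrite integral_cst // [X in (_ * X)%E](_ : _ = 1%E) ?mule1; last exact: probability_setT.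
    rewrite ge0_integralZl //; last by move=> x _; rewrite lee_fin.
    by rewrite -/(expmoment rho beta) EE.
  all: try (by move=> x _; rewrite -EFinM lee_fin mulr_ge0).
  all: try (by apply: emeasurable_funM => //; exact: measurable_cst).
  all: try exact: measurable_cst.
have Irho0 : (0 <= \int[rho]_x (f x)%:E)%E by apply: integral_ge0 => x _; rewrite lee_fin.
pose Irho := fine (\int[rho]_x (f x)%:E).
have IrhoE : (\int[rho]_x (f x)%:E = Irho%:E)%E.
  by rewrite /Irho fineK // ge0_fin_numE // (le_lt_trans Irho_le) // ltry.
have L1 : L2sq mu (w y) = Imu%:E by exact: ImuE.
have L2 : L2sq rho (w y) = Irho%:E by exact: IrhoE.
rewrite L1 L2 EE -EFinB abse_EFin -!EFinM.
set a := (C1 + C3) * (1 + r).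
set bq := (C1 + C3) * E * expR (- beta' * r).
set X := `|Imu - Irho|.
have a0 : 0 < a by rewrite /a; have := ltW r0; nra.
have key : forall pi, coupling mu rho pi ->
    ((X - bq)%:E <= a%:E * \int[pi]_z (enorm ((z.1 : 'rV[R]_d) - z.2))%:E)%E.
  move=> pi Hpi.
  have e1 : (\int[pi]_z (f z.1)%:E = Imu%:E)%E.
    by rewrite -ImuE; exact: (@marg1 R d mu rho pi (fun x => (f x)%:E) Hpi mfE (fun x => f0 x)).
  have e2 : (\int[pi]_z (f z.2)%:E = Irho%:E)%E.
    by rewrite -IrhoE; exact: (@marg2 R d mu rho pi (fun x => (f x)%:E) Hpi mfE (fun x => f0 x)).
  have e3 : (\int[pi]_z (ex z.2)%:E = E%:E)%E.
    by rewrite -EE; exact: (@marg2 R d mu rho pi (fun x => (ex x)%:E) Hpi mexE (fun x => ex0 x)).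
  have mf1 : measurable_fun (setT : set (Rd R d * Rd R d)%type) (fun z => f z.1).
    exact: (measurableT_comp mf measurable_fst).
  have mf2 : measurable_fun (setT : set (Rd R d * Rd R d)%type) (fun z => f z.2).
    exact: (measurableT_comp mf measurable_snd).
  have mex2 : measurable_fun (setT : set (Rd R d * Rd R d)%type) (fun z => ex z.2).
    exact: (measurableT_comp mex measurable_snd).
  have me := meas_enorm2 R d.
  have int1 : pi.-integrable setT (EFin \o (fun z => f z.1)).
    apply/integrableP; split; first exact/measurable_EFinP.
    rewrite (_ : (\int[pi]_z `|(EFin \o (fun z => f z.1)) z| = \int[pi]_z (f z.1)%:E)%E).
      by rewrite e1 ltry.
    by apply: eq_integral => z _; rewrite /= ger0_norm.
  have int2 : pi.-integrable setT (EFin \o (fun z => f z.2)).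
    apply/integrableP; split; first exact/measurable_EFinP.
    rewrite (_ : (\int[pi]_z `|(EFin \o (fun z => f z.2)) z| = \int[pi]_z (f z.2)%:E)%E).
      by rewrite e2 ltry.
    by apply: eq_integral => z _; rewrite /= ger0_norm.
  have hB : ((Imu - Irho)%:E = \int[pi]_z ((f z.1)%:E - (f z.2)%:E))%E.
    by rewrite (integralB_EFin measurableT int1 int2) e1 e2.
  have mabs : measurable_fun (setT : set (Rd R d * Rd R d)%type)
      (fun z => `|(f z.1)%:E - (f z.2)%:E|%E).
    rewrite (_ : (fun z => _) = EFin \o (fun z => `|f z.1 - f z.2|)); last first.
      by apply/funext => z.
    apply/measurable_EFinP; apply: measurableT_comp => //.
    exact: measurable_funB.
  have hX : (X%:E <= \int[pi]_z `|(f z.1)%:E - (f z.2)%:E|)%E.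
    rewrite /X -abse_EFin hB; apply: le_abse_integral => //.
    by apply: emeasurable_funB; exact/measurable_EFinP.
  pose q := (C1 + C3) * expR (- beta' * r).
  have q0 : 0 <= q by rewrite mulr_ge0 ?expR_ge0 // addr_ge0 // ltW.
  pose G := fun z : Rd R d * Rd R d => a * enorm ((z.1 : 'rV[R]_d) - z.2) + q * ex z.2.
  have hG : (\int[pi]_z `|(f z.1)%:E - (f z.2)%:E| <= \int[pi]_z (G z)%:E)%E.
    apply: ae_ge0_le_integral => //.
    - by move=> z _; rewrite lee_fin /G addr_ge0 // mulr_ge0 // ?enorm_ge0 // ltW.
    - apply/measurable_EFinP; apply: measurable_funD.
        by apply: measurable_funM => //; exact: measurable_cst.
      by apply: measurable_funM => //; exact: measurable_cst.
    exists (N `*` setT); split.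
    - exact: measurableX mN measurableT.
    - by rewrite -Hmu; exact: (Hpi.1 N mN).
    move=> [x x'] /= hz; split => //; rewrite /N /= ltNge; apply/negP => hxr.
    apply: hz => _; rewrite lee_fin /G /f /=.
    have hp := pw _ _ _ _ Lw0 HL _ _ _ _ x x' y m0 bm mb r0 hxr hy.
    apply: (le_trans hp); rewrite -/C1 -/K0 -/c -/C3 -/(ex x').
    have he := enorm_ge0 _ _ ((x : 'rV[R]_d) - x').
    have hq : 0 <= expR (- beta' * r) := expR_ge0 _.
    have hex := ex0 x'.
    have : 0 <= C3 * (1 + r) * enorm ((x : 'rV[R]_d) - x').
      by apply: mulr_ge0 => //; apply: mulr_ge0 => //; have := ltW r0; lra.
    have : 0 <= C1 * expR (- beta' * r) * ex x' by apply: mulr_ge0 => //; apply: mulr_ge0 => //; exact: ltW.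
    rewrite /a /q; lra.
  have hI : (\int[pi]_z (G z)%:E =
      a%:E * \int[pi]_z (enorm ((z.1 : 'rV[R]_d) - z.2))%:E + (q * E)%:E)%E.
    rewrite (eq_integral (fun z : Rd R d * Rd R d => a%:E * (enorm ((z.1 : 'rV[R]_d) - z.2))%:E
                                + q%:E * (ex z.2)%:E)%E); last first.
      by move=> z _; rewrite /G EFinD !EFinM.
    rewrite ge0_integralD //.
    - rewrite ge0_integralZl //; try (by move=> z _; rewrite lee_fin ?enorm_ge0); try (by apply/measurable_EFinP); try (by rewrite lee_fin ltW).
      rewrite ge0_integralZl //; try (by move=> z _; rewrite lee_fin ?enorm_ge0); try (by apply/measurable_EFinP); try (by rewrite lee_fin ltW).
      by rewrite e3 EFinM.
    all: try (by move=> z _; rewrite -EFinM lee_fin mulr_ge0 ?enorm_ge0 // ltW).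
    all: try (by apply: emeasurable_funM; [exact: measurable_cst | exact/measurable_EFinP]).
  have hbq : bq = q * E by rewrite /bq /q mulrAC.
  rewrite EFinB leeBlDr // hbq -hI.
  exact: (le_trans hX hG).
have hW : (((X - bq) / a)%:E <= W1 mu rho)%E.
  apply: le_ereal_inf_tmp => _ [pi Hpi <-].
  rewrite mulrC EFinM lee_pdivrMl //; exact: key.
rewrite -leeBlDr //.
apply: le_trans (lee_wpmul2l _ hW); last by rewrite lee_fin ltW.
by rewrite -EFinM mulrC divfK ?gt_eqF // EFinB.
Qed.
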